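(* Let $q$ be a prime power, $m\ge2$, $1\le k<n$, and let $X\in \mathbb{F}_{q^m}^{k\times(n-k)}$ be chosen uniformly at random. Then $$\Pr\big(\mathrm{rs} [\,I_k \mid X\,] \text{ is a generalized Gabidulin code}\big) \leq \phi(m)\,( 2q^{1-m})^{\lfloor\frac{k}{2}\rfloor \lfloor\frac{n-k}{2}\rfloor},$$ where $\phi$ is Euler's totient function.
   Context: $\mathrm{rs}$ denotes $\mathbb{F}_{q^m}$-row space. For $s$ coprime to $m$ and $g_1,\dots,g_n\in\mathbb{F}_{q^m}$ linearly independent over $\mathbb{F}_q$, the generalized Gabidulin code of dimension $k$ with parameter $s$ is the row space of the $k\times n$ matrix with $(i,j)$ entry $g_j^{q^{s(i-1)}}$; a generalized Gabidulin code is such a code for some such $s$ and $g_1,\dots,g_n$. *)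

(* Defs.v *)
From mathcomp Require Import all_boot all_order all_algebra.
From mathcomp Require Import boolp.
Set Implicit Arguments. Unset Strict Implicit. Unset Printing Implicit Defensive.
Import GRing.Theory.
Local Open Scope ring_scope.

Definition prime_power (q : nat) : Prop :=
  exists p e : nat, [/\ prime p, (0 < e)%N & q = (p ^ e)%N].

(* The prime subfield F_q of L (when #|L| = q^m): elements fixed by x |-> x^q. *)
Definition in_Fq (L : finFieldType) (q : nat) (x : L) : Prop := x ^+ q = x.

Definition Fq_lin_indep (L : finFieldType) (q n : nat) (g : 'rV[L]_n) : Prop :=
  forall c : 'I_n -> L, (forall j, in_Fq q (c j)) ->
    \sum_(j < n) c j * g 0 j = 0 -> forall j, c j = 0.

(* generator matrix of the generalized Gabidulin code: entry (i,j) = g_j^(q^(s i))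
   (rows indexed from 0, so i here is i-1 of the paper) *)
Definition gabidulin_mx (L : finFieldType) (q s k n : nat) (g : 'rV[L]_n)
  : 'M[L]_(k, n) := \matrix_(i < k, j < n) g 0 j ^+ (q ^ (s * i)).

Definition is_gen_gabidulin (L : finFieldType) (q m k n : nat) (A : 'M[L]_(k, n))
  : Prop :=
  exists (s : nat) (g : 'rV[L]_n),
    [/\ coprime s m, Fq_lin_indep q g & (A == gabidulin_mx q s k g)%MS].

Definition prob_gabidulin (L : finFieldType) (q m k r : nat) : rat :=
  (#|[set X : 'M[L]_(k, r) |
       `[< is_gen_gabidulin q m (row_mx (1%:M : 'M[L]_k) X) >] ]|%:R
   / #|{: 'M[L]_(k, r)}|%:R).

(* Main.v *)
Require Import Defs.
From mathcomp Require Import all_boot all_order all_algebra.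
From mathcomp Require Import boolp.
From mathcomp Require Import finfield.
From mathcomp Require Import zify.
From Stdlib Require Import Lia.
Import GRing.Theory Num.Theory.
Local Open Scope ring_scope.
Set Implicit Arguments. Unset Strict Implicit.

Lemma card_coprime m : #|[set t : 'I_m | coprime t m]| = totient m.
Proof.
rewrite totient_count_coprime big_mkord -sum1_card big_mkcond /=.
by apply: eq_bigr => i _; rewrite inE coprime_sym; case: coprime.
Qed.

Lemma frob_mod (L : finFieldType) q m (hL : #|L| = (q ^ m)%N) (x : L) a :
  x ^+ (q ^ a) = x ^+ (q ^ (a %% m)).
Proof.
rewrite {1}(div.divn_eq a m) expnD exprM.
suff -> : x ^+ (q ^ (a %/ m * m)%N) = x by [].
elim: (a %/ m)%N => [|d IH]; first by rewrite mul0n expn0 expr1.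
by rewrite mulSn expnD exprM -hL expf_card.
Qed.

Lemma X_of_eqmx (L : fieldType) k r (A : 'M[L]_(k, k + r)) (X : 'M_(k, r)) :
  (row_mx 1%:M X == A)%MS -> X = invmx (lsubmx A) *m rsubmx A.
Proof.
case/andP => /submxP [C hC] /submxP [B hB].
have eA : A = row_mx B (B *m X) by rewrite hB mul_mx_row mulmx1.
rewrite eA row_mxKl row_mxKr.
move: hC; rewrite eA mul_mx_row => /eq_row_mx [h1 _].
have [_ uB] := mulmx1_unit (esym h1).
by rewrite mulKmx.
Qed.

Definition Gp (L : finFieldType) q m k' r (p : 'I_m * 'rV[L]_(k' + r))
  : 'M[L]_(k'.+1, k'.+1 + r) :=
  gabidulin_mx q p.1 k'.+1 (row_mx (const_mx 1 : 'rV_1) p.2 : 'rV_(k'.+1 + r)).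

Definition Fp (L : finFieldType) q m k' r (p : 'I_m * 'rV[L]_(k' + r))
  : 'M[L]_(k'.+1, r) :=
  invmx (lsubmx (Gp q p)) *m rsubmx (Gp q p).

Lemma good_in_image (L : finFieldType) q m k' r (hL : #|L| = (q ^ m)%N)
  (hq0 : (0 < q)%N) (hm0 : (0 < m)%N) (X : 'M[L]_(k'.+1, r)) :
  is_gen_gabidulin q m (row_mx 1%:M X) ->
  exists2 p : 'I_m * 'rV[L]_(k' + r), coprime p.1 m & X = Fp q p.
Proof.
move=> [s [g [cop li eq]]].
have g0 : g 0 0 != 0.
  apply/eqP => g00.
  have h1 : forall j, in_Fq q ((j == 0 :> 'I_(k'.+1 + r))%:R : L).
    move=> j; rewrite /in_Fq; case: (j == 0); [exact: expr1n | by rewrite expr0n eqn0Ngt hq0].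
  have h2 : \sum_(j < k'.+1 + r) (j == 0)%:R * g 0 j = 0.
    by rewrite big1 // => j _; case: eqP => [->|_]; rewrite ?g00 ?mulr0 ?mul0r.
  have := li _ h1 h2 0; case: eqP => // _ /eqP.
  by rewrite oner_eq0.
pose lam := (g 0 0)^-1.
pose g' := lam *: g.
pose t : 'I_m := Ordinal (ltn_pmod s hm0).
exists (t, rsubmx (g' : 'rV_(1 + (k' + r)))); first by rewrite /= coprime_modl.
apply: X_of_eqmx.
have eg : row_mx (const_mx 1 : 'rV_1) (rsubmx (g' : 'rV_(1 + (k' + r)))) = g'.
  rewrite -[RHS](hsubmxK (g' : 'rV_(1 + (k' + r)))); congr (row_mx _ _).
  apply/rowP => i; rewrite ord1 !mxE.
  have -> : lshift (k' + r) (0 : 'I_1) = 0 by apply/val_inj.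
  by rewrite mulVf.
rewrite /Gp /= eg.
apply/eqmxP; apply: eqmx_trans (eqmxP eq) _; apply/eqmxP.
have fe : forall (x : L) a b, (a %% m = b %% m)%N -> x ^+ (q ^ a) = x ^+ (q ^ b).
  by move=> x a b e; rewrite (frob_mod hL x a) (frob_mod hL x b) e.
pose c := \row_(i < k'.+1) lam ^+ (q ^ (t * i)).
pose c' := \row_(i < k'.+1) (lam ^+ (q ^ (t * i)))^-1.
have eG : gabidulin_mx q t k'.+1 g' = diag_mx c *m gabidulin_mx q s k'.+1 g.
  apply/matrixP => i j; rewrite mul_diag_mx !mxE exprMn; congr (_ * _).
  by apply: fe; rewrite /= modnMml.
have lam0 : lam != 0 by rewrite invr_eq0.
have DK : diag_mx c' *m (diag_mx c *m gabidulin_mx q s k'.+1 g)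
          = gabidulin_mx q s k'.+1 g.
  apply/matrixP => i j; rewrite !mul_diag_mx !mxE mulrA mulVf ?mul1r //.
  by rewrite expf_neq0.
rewrite eG; apply/andP; split; last exact: submxMl.
by rewrite -{1}DK submxMl.
Qed.

Theorem theorem4p9 (q m k r : nat) (L : finFieldType)
  (hq : prime_power q) (hL : #|L| = (q ^ m)%N) (hm : (2 <= m)%N)
  (hk : (1 <= k)%N) (hr : (1 <= r)%N) :
  prob_gabidulin L q m k r <=
    (totient m)%:R * (2%:R / (q%:R ^+ (m - 1)%N)) ^+ (k./2 * r./2)%N.
Proof.
have hq0 : (0 < q)%N by case: hq => p [e [pp e0 ->]]; rewrite expn_gt0 prime_gt0.
have hm0 : (0 < m)%N by apply: leq_trans hm.
case: k hk => // k' _.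
rewrite /prob_gabidulin.
set S := [set X | _].
have sub : S \subset [set Fp q p | p in [set p : 'I_m * 'rV[L]_(k' + r) | coprime p.1 m]].
  apply/subsetP => X; rewrite inE => /asboolP /(good_in_image hL hq0 hm0) [p cp ->].
  by apply: imset_f; rewrite inE.
have cS : (#|S| <= totient m * (q ^ m) ^ (k' + r))%N.
  apply: leq_trans (subset_leq_card sub) _; apply: leq_trans (leq_imset_card _ _) _.
  have -> : [set p : 'I_m * 'rV[L]_(k' + r) | coprime p.1 m]
            = setX [set t : 'I_m | coprime t m] setT.
    by apply/setP => -[a b]; rewrite !inE andbT.
  by rewrite cardsX card_coprime cardsT card_mx hL mul1n.
set e := (k'.+1./2 * r./2)%N.
have he : (m * (k' + r) + (m - 1) * e <= m * (k'.+1 * r))%N.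
  have h1 : (k'.+1./2 <= k')%N.
    lia.
  have h2 : (r./2 <= r.-1)%N.
    lia.
  have h3 : (e <= k' * r.-1)%N by apply: leq_mul.
  have h4 : ((m - 1) * e <= m * (k' * r.-1))%N by apply: leq_mul => //; lia.
  have h5 : (m * (k' + r) + m * (k' * r.-1) = m * (k'.+1 * r))%N.
    rewrite -mulnDr; congr (m * _)%N; rewrite -{1 3}(prednK hr); lia.
  by rewrite -h5 leq_add2l.
have nat_ineq : (#|S| * (q ^ (m - 1)) ^ e <= (totient m * 2 ^ e) * (q ^ m) ^ (k'.+1 * r))%N.
  apply: leq_trans (leq_mul cS (leqnn _)) _.
  apply: (@leq_trans (totient m * (q ^ m) ^ (k'.+1 * r))).
    by rewrite -mulnA leq_mul // -!expnM -expnD leq_pexp2l.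
  by rewrite mulnAC leq_pmulr // expn_gt0.
rewrite card_mx hL expr_div_n -natrX -natrX mulrA -natrM.
rewrite ler_pdivrMr ?ltr0n ?expn_gt0 ?hq0 // mulrAC ler_pdivlMr ?exprn_gt0 ?ltr0n ?expn_gt0 ?hq0 //.
by rewrite -natrX -!natrM ler_nat.
Qed.
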